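(* Let $m\ge n$, $B\in\mathbb R^{n\times m}$ of full row rank, $f,h$ convex and continuously differentiable with Lipschitz gradients, $\mathcal L(u,p)=f(u)-h(p)+(Bu,p)$ with saddle point $(u^*,p^* )$, and $\mathcal I_{\mathcal V},\mathcal I_{\mathcal Q}$ symmetric positive definite. Suppose $f\in\mathcal S^{1,1}_{\mu_{f,\mathcal I_{\mathcal V}},L_{f,\mathcal I_{\mathcal V}}}$ w.r.t. $\mathcal I_{\mathcal V}$ with $0<\mu_{f,\mathcal I_{\mathcal V}}\le L_{f,\mathcal I_{\mathcal V}}<2$. Let $(u_k,p_k)$ be generated from $(u_0,p_0)$ by the inexact IMEX iteration $$u_{k+1/2}=u_k-\mathcal I_{\mathcal V}^{-1}(\nabla f(u_k)+B^\top p_k),\qquad p_{k+1}=p_k-\alpha_k\mathcal I_{\mathcal Q}^{-1}(\nabla h(p_k)-Bu_{k+1/2}),$$ where $u_{k+1}$ is any point satisfying $\|\nabla\tilde f(u_{k+1};u_k,p_{k+1})\|^2_{\mathcal I_{\mathcal V}^{-1}}\le\epsilon_k$ for $k=0,1,2,\dots$, with $\tilde f(u;u_k,p_{k+1})=f(u)+\frac1{2\alpha_k}\|u-u_k+\alpha_k\mathcal I_{\mathcal V}^{-1}B^\top p_{k+1}\|^2_{\mathcal I_{\mathcal V}}$ (gradient in $u$). Then for $0<\alpha_k<\mu_{\mathcal Q}/L_{S,\mathcal Q}^2$ and $\mu_k=\min\{\mu_{\mathcal V}/2,\ \mu_{\mathcal Q}-\alpha_kL_{S,\mathcal Q}^2\}$,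 $$\mathcal E(u_{k+1},p_{k+1})\le\frac1{1+\alpha_k\mu_k}\mathcal E(u_k,p_k)+\frac{2\alpha_k}{(1+\alpha_k\mu_k)\mu_{\mathcal V}}\epsilon_k.$$ In particular, for $\alpha_k=\mu_{\mathcal Q}/(2L_{S,\mathcal Q}^2)$ for all $k$, $$\mathcal E(u_{n+1},p_{n+1})\le\rho^{n+1}\mathcal E(u_0,p_0)+\frac{\mu_{\mathcal Q}}{\mu_{\mathcal V}L_{S,\mathcal Q}^2}\sum_{k=0}^n\rho^{n-k+1}\epsilon_k,$$ where $\mu=\min\{\mu_{\mathcal V},\mu_{\mathcal Q}\}$ and $\rho=1/(1+\mu_{\mathcal Q}\mu/(4L_{S,\mathcal Q}^2))\in(0,1)$.
   Context: For SPD $M$, $\|x\|_M=(Mx,x)^{1/2}$; $D_g(y,x)=g(y)-g(x)-(\nabla g(x),y-x)$; $g\in\mathcal S^{1,1}_{\mu_{g,M},L_{g,M}}$ w.r.t. $M$ means $\frac{\mu_{g,M}}2\|x-y\|_M^2\le D_g(y,x)\le\frac{L_{g,M}}2\|x-y\|_M^2$ for all $x,y$. A saddle point satisfies $\nabla f(u^* )+B^\top p^*=0$, $Bu^*=\nabla h(p^* )$. Define $e(u)=u-\mathcal I_{\mathcal V}^{-1}\nabla f(u)$, $h_B(p)=h(p)+\frac12(B\mathcal I_{\mathcal V}^{-1}B^\top p,p)$, $\mathcal E(u,p)=\frac12\|u-u^*\|^2_{\mathcal I_{\mathcal V}}+\frac12\|p-p^*\|^2_{\mathcal I_{\mathcal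 Q}}$. Let $L_{e,\mathcal I_{\mathcal V}}$ be the Lipschitz constant of $e$ in $\|\cdot\|_{\mathcal I_{\mathcal V}}$, $\mu_{h_B,\mathcal I_{\mathcal Q}},L_{h_B,\mathcal I_{\mathcal Q}}$ the convexity and smoothness constants of $h_B$ w.r.t. $\mathcal I_{\mathcal Q}$, $L_S^2=\lambda_{\max}(\mathcal I_{\mathcal Q}^{-1}B\mathcal I_{\mathcal V}^{-1}B^\top)$. Constants: $\mu_{\mathcal V}=\mu_{f,\mathcal I_{\mathcal V}}$, $\mu_{\mathcal Q}=(2-L_{f,\mathcal I_{\mathcal V}})\mu_{h_B,\mathcal I_{\mathcal Q}}$, $L_{S,\mathcal Q}^2=L_{h_B,\mathcal I_{\mathcal Q}}^2+L_{e,\mathcal I_{\mathcal V}}^2L_S^2$. *)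

(* Defs.v *)
From HB Require Import structures.
From mathcomp Require Import all_boot all_order all_algebra.
From mathcomp Require Import all_classical all_reals all_analysis.
Set Implicit Arguments. Unset Strict Implicit. Unset Printing Implicit Defensive.
Import Order.TTheory GRing.Theory Num.Theory.
Import numFieldNormedType.Exports.
Local Open Scope ring_scope.

Section Defs.
Variable R : realType.

Definition dotv {k : nat} (x y : 'cV[R]_k) : R := (x^T *m y) 0 0.

Definition mnorm2 {k : nat} (M : 'M[R]_k) (x : 'cV[R]_k) : R := dotv (M *m x) x.

Definition spd {k : nat} (M : 'M[R]_k) : Prop :=
  M^T = M /\ forall x : 'cV[R]_k, x != 0 -> 0 < mnorm2 M x.

Definition is_gradient {k : nat} (f : 'cV[R]_k -> R) (df : 'cV[R]_k -> 'cV[R]_k) : Prop :=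
  forall x v : 'cV[R]_k, is_derive x v f (dotv (df x) v).

Definition convex_fun {k : nat} (f : 'cV[R]_k -> R) : Prop :=
  forall (x y : 'cV[R]_k) (t : R), 0 <= t <= 1 ->
    f (t *: x + (1 - t) *: y) <= t * f x + (1 - t) * f y.

Definition lipschitz_map {k : nat} (g : 'cV[R]_k -> 'cV[R]_k) : Prop :=
  exists L : R, 0 <= L /\ forall x y : 'cV[R]_k,
    dotv (g x - g y) (g x - g y) <= L ^+ 2 * dotv (x - y) (x - y).

Definition bregman {k : nat} (g : 'cV[R]_k -> R) (dg : 'cV[R]_k -> 'cV[R]_k)
  (y x : 'cV[R]_k) : R := g y - g x - dotv (dg x) (y - x).

Definition in_S11 {k : nat} (g : 'cV[R]_k -> R) (dg : 'cV[R]_k -> 'cV[R]_k)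
  (M : 'M[R]_k) (mu L : R) : Prop :=
  forall x y : 'cV[R]_k,
    mu / 2 * mnorm2 M (x - y) <= bregman g dg y x <= L / 2 * mnorm2 M (x - y).

Definition lagr {m n : nat} (f : 'cV[R]_m -> R) (h : 'cV[R]_n -> R)
  (B : 'M[R]_(n, m)) (u : 'cV[R]_m) (p : 'cV[R]_n) : R :=
  f u - h p + dotv (B *m u) p.

Definition saddle_point {m n : nat} (f : 'cV[R]_m -> R) (h : 'cV[R]_n -> R)
  (B : 'M[R]_(n, m)) (us : 'cV[R]_m) (ps : 'cV[R]_n) : Prop :=
  forall (u : 'cV[R]_m) (p : 'cV[R]_n),
    lagr f h B us p <= lagr f h B us ps /\ lagr f h B us ps <= lagr f h B u ps.

Definition emap {m : nat} (IV : 'M[R]_m) (df : 'cV[R]_m -> 'cV[R]_m) (u : 'cV[R]_m)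
  : 'cV[R]_m := u - invmx IV *m df u.

Definition hB {m n : nat} (h : 'cV[R]_n -> R) (B : 'M[R]_(n, m)) (IV : 'M[R]_m)
  (p : 'cV[R]_n) : R := h p + 2^-1 * dotv (B *m invmx IV *m B^T *m p) p.
Definition dhB {m n : nat} (dh : 'cV[R]_n -> 'cV[R]_n) (B : 'M[R]_(n, m)) (IV : 'M[R]_m)
  (p : 'cV[R]_n) : 'cV[R]_n := dh p + B *m invmx IV *m B^T *m p.

Definition energy {m n : nat} (IV : 'M[R]_m) (IQ : 'M[R]_n)
  (us : 'cV[R]_m) (ps : 'cV[R]_n) (u : 'cV[R]_m) (p : 'cV[R]_n) : R :=
  2^-1 * mnorm2 IV (u - us) + 2^-1 * mnorm2 IQ (p - ps).

Definition u_half {m n : nat} (IV : 'M[R]_m) (B : 'M[R]_(n, m))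
  (df : 'cV[R]_m -> 'cV[R]_m) (uk : 'cV[R]_m) (pk : 'cV[R]_n) : 'cV[R]_m :=
  uk - invmx IV *m (df uk + B^T *m pk).

Definition p_next {m n : nat} (IV : 'M[R]_m) (IQ : 'M[R]_n) (B : 'M[R]_(n, m))
  (df : 'cV[R]_m -> 'cV[R]_m) (dh : 'cV[R]_n -> 'cV[R]_n) (alpha : R)
  (uk : 'cV[R]_m) (pk : 'cV[R]_n) : 'cV[R]_n :=
  pk - alpha *: (invmx IQ *m (dh pk - B *m u_half IV B df uk pk)).

(* ftilde(u; u_k, p_{k+1}) = f(u) + 1/(2 alpha) ||u - u_k + alpha I_V^{-1} B^T p_{k+1}||^2_{I_V}
   and its gradient in u (I_V symmetric) *)
Definition ftilde {m n : nat} (IV : 'M[R]_m) (B : 'M[R]_(n, m)) (f : 'cV[R]_m -> R)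
  (alpha : R) (uk : 'cV[R]_m) (pk1 : 'cV[R]_n) (u : 'cV[R]_m) : R :=
  f u + (2 * alpha)^-1 * mnorm2 IV (u - uk + alpha *: (invmx IV *m (B^T *m pk1))).
Definition grad_ftilde {m n : nat} (IV : 'M[R]_m) (B : 'M[R]_(n, m))
  (df : 'cV[R]_m -> 'cV[R]_m) (alpha : R) (uk : 'cV[R]_m) (pk1 : 'cV[R]_n)
  (u : 'cV[R]_m) : 'cV[R]_m :=
  df u + alpha^-1 *: (IV *m (u - uk + alpha *: (invmx IV *m (B^T *m pk1)))).

End Defs.

(* Main.v *)
Require Import Defs.
From HB Require Import structures.
From mathcomp Require Import all_boot all_order all_algebra.
From mathcomp Require Import all_classical all_reals all_analysis.
From mathcomp Require Import ring lra.
Import Order.TTheory GRing.Theory Num.Theory.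
Import numFieldNormedType.Exports.
Set Implicit Arguments. Unset Strict Implicit. Unset Printing Implicit Defensive.
Local Open Scope classical_set_scope.
Local Open Scope ring_scope.

Section Lin.
Variable R : realType.
Implicit Types (k : nat).

Lemma dotvE k (x y : 'cV[R]_k) : dotv x y = \sum_i x i 0 * y i 0.
Proof. by rewrite /dotv !mxE; apply: eq_bigr => i _; rewrite !mxE. Qed.

Lemma dotvC k (x y : 'cV[R]_k) : dotv x y = dotv y x.
Proof. by rewrite !dotvE; apply: eq_bigr => i _; rewrite mulrC. Qed.

Lemma dotvDl k (x y z : 'cV[R]_k) : dotv (x + y) z = dotv x z + dotv y z.
Proof. by rewrite !dotvE -big_split /=; apply: eq_bigr => i _; rewrite !mxE mulrDl. Qed.

Lemma dotvDr k (x y z : 'cV[R]_k) : dotv z (x + y) = dotv z x + dotv z y.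
Proof. by rewrite ![dotv z _]dotvC dotvDl. Qed.

Lemma dotvZl k a (x y : 'cV[R]_k) : dotv (a *: x) y = a * dotv x y.
Proof. by rewrite !dotvE mulr_sumr; apply: eq_bigr => i _; rewrite !mxE mulrA. Qed.

Lemma dotvZr k a (x y : 'cV[R]_k) : dotv y (a *: x) = a * dotv y x.
Proof. by rewrite ![dotv y _]dotvC dotvZl. Qed.

Lemma dotvNl k (x y : 'cV[R]_k) : dotv (- x) y = - dotv x y.
Proof. by rewrite -scaleN1r dotvZl mulN1r. Qed.

Lemma dotvNr k (x y : 'cV[R]_k) : dotv y (- x) = - dotv y x.
Proof. by rewrite ![dotv y _]dotvC dotvNl. Qed.

Lemma dotvBl k (x y z : 'cV[R]_k) : dotv (x - y) z = dotv x z - dotv y z.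
Proof. by rewrite dotvDl dotvNl. Qed.

Lemma dotvBr k (x y z : 'cV[R]_k) : dotv z (x - y) = dotv z x - dotv z y.
Proof. by rewrite dotvDr dotvNr. Qed.

Lemma dotv0l k (x : 'cV[R]_k) : dotv 0 x = 0.
Proof. by rewrite -(scale0r 0) dotvZl mul0r. Qed.

Lemma dotv0r k (x : 'cV[R]_k) : dotv x 0 = 0.
Proof. by rewrite dotvC dotv0l. Qed.

Lemma dotv_mulmx p q (A : 'M[R]_(p, q)) x y : dotv (A *m x) y = dotv x (A^T *m y).
Proof. by rewrite /dotv trmx_mul mulmxA. Qed.

Lemma dotv_ge0 k (x : 'cV[R]_k) : 0 <= dotv x x.
Proof. by rewrite dotvE; apply: sumr_ge0 => i _; rewrite -expr2 sqr_ge0. Qed.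

Lemma dotv_eq0 k (x : 'cV[R]_k) : dotv x x = 0 -> x = 0.
Proof.
rewrite dotvE => /eqP; rewrite psumr_eq0; last by move=> i _; rewrite -expr2 sqr_ge0.
move=> /allP H; apply/matrixP => i j; rewrite (ord1 j) mxE.
have := H i (mem_index_enum _); rewrite -expr2 sqrf_eq0 => /eqP; done.
Qed.

Lemma mnorm2N k (M : 'M[R]_k) x : mnorm2 M (- x) = mnorm2 M x.
Proof. by rewrite /mnorm2 mulmxN dotvNl dotvNr opprK. Qed.

Lemma mnorm2Z k (M : 'M[R]_k) a x : mnorm2 M (a *: x) = a ^+ 2 * mnorm2 M x.
Proof. by rewrite /mnorm2 -scalemxAr dotvZl dotvZr mulrA expr2. Qed.

Lemma mnorm2D k (M : 'M[R]_k) x y : M^T = M ->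
  mnorm2 M (x + y) = mnorm2 M x + 2 * dotv (M *m x) y + mnorm2 M y.
Proof.
move=> sM; rewrite /mnorm2 mulmxDr !dotvDl !dotvDr.
rewrite [dotv (M *m y) x]dotv_mulmx sM [dotv y _]dotvC; ring.
Qed.

Lemma mnorm2B k (M : 'M[R]_k) x y : M^T = M ->
  mnorm2 M (x - y) = mnorm2 M x - 2 * dotv (M *m x) y + mnorm2 M y.
Proof. by move=> sM; rewrite mnorm2D // mnorm2N dotvNr; ring. Qed.

Lemma mnorm2_0 k (M : 'M[R]_k) : mnorm2 M 0 = 0.
Proof. by rewrite /mnorm2 dotv0r. Qed.

End Lin.

Section SPD.
Variable R : realType.
Implicit Types (k : nat).

Lemma spd_ge0 k (M : 'M[R]_k) x : spd M -> 0 <= mnorm2 M x.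
Proof.
move=> [_ pM]; have [->|/pM/ltW//] := eqVneq x 0.
by rewrite mnorm2_0.
Qed.

Lemma spd_eq0 k (M : 'M[R]_k) x : spd M -> mnorm2 M x <= 0 -> x = 0.
Proof.
move=> [_ pM] H; apply/eqP; apply/negPn/negP => /pM; rewrite ltNge H //.
Qed.

Lemma spd_unit k (M : 'M[R]_k) : spd M -> M \in unitmx.
Proof.
move=> [sM pM]; rewrite -row_free_unit -kermx_eq0; apply/negPn/negP => H.
have : eigenvalue M 0.
  by rewrite /eigenvalue /eigenspace (_ : M - 0%:M = M) // raddf0 subr0.
move=> /eigenvalueP [v vM v0].
have Hx : v^T != 0 by rewrite -(inj_eq (@trmx_inj _ _ _)) trmxK trmx0.
have := pM _ Hx; rewrite /mnorm2 -{1}sM -trmx_mul vM scale0r trmx0 dotv0l ltxx //.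
Qed.

Lemma spd_inv k (M : 'M[R]_k) : spd M -> spd (invmx M).
Proof.
move=> sp; have uM := spd_unit sp; case: sp => sM pM; split.
  by rewrite trmx_inv sM.
move=> x x0; have y0 : invmx M *m x != 0.
  apply/negP => /eqP H; move: x0; rewrite -(mulKVmx uM x) H mulmx0 eqxx //.
have := pM _ y0; rewrite /mnorm2 mulKVmx // dotvC //.
Qed.

Lemma mnorm2_inv k (M : 'M[R]_k) g : spd M ->
  mnorm2 M (invmx M *m g) = mnorm2 (invmx M) g.
Proof.
move=> sp; have uM := spd_unit sp.
by rewrite /mnorm2 mulKVmx // dotvC.
Qed.

Lemma young k (M : 'M[R]_k) x y c : spd M -> 0 < c ->
  2 * dotv (M *m x) y <= c * mnorm2 M x + c^-1 * mnorm2 M y.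
Proof.
move=> sp c0; have := spd_ge0 (c *: x - y) sp.
rewrite mnorm2B; last by case: sp.
rewrite mnorm2Z -scalemxAr dotvZl => H.
have : 0 <= c^-1 * (c ^+ 2 * mnorm2 M x - 2 * (c * dotv (M *m x) y) + mnorm2 M y).
  by rewrite mulr_ge0 // invr_ge0 ltW.
rewrite !mulrDr mulrN !mulrA (mulrC c^-1) -!mulrA mulKf ?gt_eqF //.
rewrite (_ : c^-1 * (2 * (c * dotv (M *m x) y)) = 2 * dotv (M *m x) y); first lra.
by field; rewrite gt_eqF.
Qed.

Lemma young_dual k (M : 'M[R]_k) g w c : spd M -> 0 < c ->
  2 * dotv g w <= c * mnorm2 (invmx M) g + c^-1 * mnorm2 M w.
Proof.
move=> sp c0; have uM := spd_unit sp.
have := young (invmx M *m g) w sp c0; rewrite mulKVmx // mnorm2_inv //.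
Qed.

End SPD.

Section S11.
Variable R : realType.
Variable k : nat.
Variables (g : 'cV[R]_k -> R) (dg : 'cV[R]_k -> 'cV[R]_k) (M : 'M[R]_k) (mu L : R).

Lemma bregman_sum x y :
  bregman g dg y x + bregman g dg x y = dotv (dg x - dg y) (x - y).
Proof.
rewrite /bregman -(opprB x y) dotvNr dotvBl; ring.
Qed.

Lemma s11_mono x y : in_S11 g dg M mu L ->
  mu * mnorm2 M (x - y) <= dotv (dg x - dg y) (x - y).
Proof.
move=> H; rewrite -bregman_sum.
have /andP[H1 _] := H x y; have /andP[H2 _] := H y x.
move: H2; rewrite -(opprB x y) mnorm2N => H2; lra.
Qed.

Lemma s11_le (x : 'cV[R]_k) : spd M -> x != 0 -> in_S11 g dg M mu L -> mu <= L.
Proof.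
move=> [_ pM] x0 H; have /andP[H1 H2] := H x 0.
have := le_trans H1 H2; rewrite subr0 => H3.
have q0 := pM _ x0.
rewrite -(ler_pM2r q0); lra.
Qed.

Lemma cocoer_half x y : spd M -> in_S11 g dg M mu L -> 0 <= mu -> 0 < L ->
  mnorm2 (invmx M) (dg y - dg x) / (2 * L) <= bregman g dg y x.
Proof.
move=> sp H mu0 L0; have uM := spd_unit sp.
set r := dg y - dg x; set s := invmx M *m r.
set z := y - L^-1 *: s.
have /andP[Hl _] := H x z.
have /andP[_ Hu] := H y z.
have q0 : 0 <= mnorm2 M (x - z) := spd_ge0 _ sp.
have Hl' : 0 <= bregman g dg z x by apply: le_trans Hl; apply: mulr_ge0 => //; lra.
move: Hu Hl'; rewrite /bregman.
have -> : y - z = L^-1 *: s by rewrite /z opprB addrC subrK.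
have -> : z - y = - (L^-1 *: s) by rewrite /z addrC addKr.
have -> : z - x = (y - x) - L^-1 *: s by rewrite /z addrAC.
rewrite mnorm2Z /s mnorm2_inv // !dotvNr !dotvBr !dotvZr.
have Hrs : dotv r (invmx M *m r) = mnorm2 (invmx M) r by rewrite /mnorm2 dotvC.
have Hrs' : dotv (dg y) (invmx M *m r) - dotv (dg x) (invmx M *m r) = mnorm2 (invmx M) r.
  by rewrite -Hrs /r dotvBl.
set Q := mnorm2 (invmx M) r.
move: Hrs'; set a1 := dotv (dg y) _; set a2 := dotv (dg x) _ => Hrs'.
move=> Hu Hl2.
have HQ : Q / (2 * L) = L^-1 * (a1 - a2) - L / 2 * (L^-1 ^+ 2 * Q).
  by rewrite Hrs' -/Q; field; rewrite gt_eqF.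
have : L^-1 * (a1 - a2) = L^-1 * a1 - L^-1 * a2 by ring.
lra.
Qed.

Lemma cocoer x y : spd M -> in_S11 g dg M mu L -> 0 <= mu -> 0 < L ->
  mnorm2 (invmx M) (dg x - dg y) <= L * dotv (dg x - dg y) (x - y).
Proof.
move=> sp H mu0 L0.
have h1 := cocoer_half x y sp H mu0 L0.
have h2 := cocoer_half y x sp H mu0 L0.
rewrite -(opprB (dg x)) mnorm2N in h1.
rewrite -bregman_sum.
set Q := mnorm2 _ _ in h1 h2 *.
have -> : Q = L * (Q / (2 * L) + Q / (2 * L)) by field; rewrite gt_eqF.
rewrite ler_pM2l //; lra.
Qed.

End S11.

Section Lip.
Variable R : realType.

Lemma lip_of_cocoer k (M : 'M[R]_k) (r w : 'cV[R]_k) L : spd M -> 0 < L ->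
  mnorm2 (invmx M) r <= L * dotv r w -> mnorm2 (invmx M) r <= L ^+ 2 * mnorm2 M w.
Proof.
move=> sp L0 H.
have c0 : 0 < L^-1 by rewrite invr_gt0.
have := young_dual r w sp c0; rewrite invrK => Y.
have : L * (2 * dotv r w) <= L * (L^-1 * mnorm2 (invmx M) r + L * mnorm2 M w).
  by rewrite ler_pM2l.
rewrite mulrDr => H2.
have e1 : L * (L^-1 * mnorm2 (invmx M) r) = mnorm2 (invmx M) r.
  by field; rewrite gt_eqF.
have e2 : L * (L * mnorm2 M w) = L ^+ 2 * mnorm2 M w by rewrite expr2 mulrA.
have e3 : L * (2 * dotv r w) = 2 * (L * dotv r w) by ring.
lra.
Qed.

End Lip.

Section Ray.
Variable R : realType.

Lemma mnorm2_rowE m (M : 'M[R]_m) (r : 'rV[R]_m) :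
  mnorm2 M r^T = \sum_i (\sum_j M i j * r 0 j) * r 0 i.
Proof.
rewrite /mnorm2 dotvE; apply: eq_bigr => i _; rewrite !mxE.
by congr (_ * _); apply: eq_bigr => j _; rewrite !mxE.
Qed.

Lemma mnorm2_row_cont m (M : 'M[R]_m) : continuous (fun r : 'rV[R]_m => mnorm2 M r^T).
Proof.
rewrite (_ : (fun r : 'rV[R]_m => mnorm2 M r^T) =
   (fun r => \sum_i (\sum_j M i j * r 0 j) * r 0 i)); last first.
  by apply: funext => r; rewrite mnorm2_rowE.
apply: continuous_big; first exact: add_continuous.
move=> i _ x.
apply: continuousM; last exact: coord_continuous.
apply: continuous_big; first exact: add_continuous.
move=> j _ y.
apply: continuousM; last exact: coord_continuous.
exact: cst_continuous.
Qed.

Lemma rayleigh_max m (K V : 'M[R]_m) : (0 < m)%N -> spd V ->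
  exists2 w0 : 'cV[R]_m, w0 != 0 &
    forall w, mnorm2 K w * mnorm2 V w0 <= mnorm2 K w0 * mnorm2 V w.
Proof.
move=> m0 sp.
pose psi := fun r : 'rV[R]_m => mnorm2 K r^T / mnorm2 V r^T.
pose A := [set r : 'rV[R]_m | `|r| = 1].
have pos : forall r : 'rV[R]_m, r != 0 -> 0 < mnorm2 V r^T.
  move=> r r0; case: sp => _ pV; apply: pV.
  by rewrite -(inj_eq (@trmx_inj _ _ _)) trmxK trmx0.
have A0 : A !=set0.
  pose r0 : 'rV[R]_m := const_mx 1.
  have r00 : r0 != 0.
    apply/negP => /eqP/matrixP/(_ 0 (Ordinal m0)); rewrite !mxE => /eqP.
    by rewrite oner_eq0.
  by exists (`|r0|^-1 *: r0); rewrite /A /= normfZV.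
have cA : compact A.
  apply: bounded_closed_compact.
    rewrite /= /bounded_near; near=> M0 => x /= ->.
    by near: M0; apply: nbhs_pinfty_ge; rewrite num_real.
  rewrite (_ : A = (fun r : 'rV[R]_m => `|r|) @^-1` [set 1]) //.
  apply: preimage_closed; first by move=> x _; exact: norm_continuous.
  exact: closed_eq.
have cpsi : {within A, continuous psi}.
  apply: continuous_in_subspaceT => r; rewrite inE /A /= => r1.
  have r0 : r != 0 by apply/negP => /eqP r0; move: r1; rewrite r0 normr0 => /esym/eqP; rewrite oner_eq0.
  apply: (continuousM (s := fun r => mnorm2 K r^T) (t := fun r => (mnorm2 V r^T)^-1)); first exact: mnorm2_row_cont.
  apply: continuousV; first by rewrite gt_eqF // pos.
  exact: mnorm2_row_cont.
have [c cA' cmax] := EVT_max_rV A0 cA cpsi.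
have c0 : c != 0.
  move: cA'; rewrite inE /A /= => c1; apply/negP => /eqP c0; move: c1.
  by rewrite c0 normr0 => /esym/eqP; rewrite oner_eq0.
exists c^T; first by rewrite -(inj_eq (@trmx_inj _ _ _)) trmxK trmx0.
move=> w; have [->|w0] := eqVneq w 0; first by rewrite !mnorm2_0 mul0r mulr0.
pose r := w^T; have r0 : r != 0 by rewrite -(inj_eq (@trmx_inj _ _ _)) trmxK trmx0.
pose t := `|r|^-1 *: r.
have tA : t \in A by rewrite inE /A /= normfZV.
have := cmax _ tA; rewrite /psi /t linearZ /= !mnorm2Z.
have nr : `|r|^-1 ^+ 2 != 0 by rewrite expf_neq0 // invr_eq0 normr_eq0.
rewrite -mulf_div divff // mul1r /r trmxK.
have pw := pos _ r0; rewrite /r trmxK in pw.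
have pc := pos _ c0.
rewrite ler_pdivrMr // mulrAC ler_pdivlMr //.
Unshelve. all: by end_near.
Qed.

End Ray.

Section Eig.
Variable R : realType.
Variables (m n : nat) (B : 'M[R]_(n, m)) (IV : 'M[R]_m) (IQ : 'M[R]_n) (LS2 : R).
Hypothesis spV : spd IV.
Hypothesis spQ : spd IQ.
Let A := invmx IQ *m B *m invmx IV *m B^T.

Lemma sym_inv k (M : 'M[R]_k) : spd M -> (invmx M)^T = invmx M.
Proof. by case=> sM _; rewrite trmx_inv sM. Qed.

Lemma eig_ge0 a : eigenvalue A a -> 0 <= a.
Proof.
move=> /eigenvalueP [v vA v0].
have sQi := sym_inv spQ; have sVi := sym_inv spV.
have pQ := spd_inv spQ; have pV := spd_inv spV.
set x := B^T *m (v *m invmx IQ)^T.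
have e : mnorm2 (invmx IV) x = a * mnorm2 (invmx IQ) v^T.
  rewrite /mnorm2 /dotv /x !trmx_mul !trmxK sQi sVi.
  have -> : v *m invmx IQ *m B *m invmx IV *m (B^T *m (invmx IQ *m v^T))
          = (v *m A) *m (invmx IQ *m v^T) by rewrite /A !mulmxA.
  by rewrite vA -scalemxAl mxE mulmxA.
have vt0 : v^T != 0 by rewrite -(inj_eq (@trmx_inj _ _ _)) trmxK trmx0.
have hp : 0 < mnorm2 (invmx IQ) v^T by case: pQ => _ H; apply: H.
have h0 := spd_ge0 x pV.
rewrite e in h0; rewrite -(pmulr_lge0 _ hp) //.
Qed.

Lemma mnorm2_Bw w : mnorm2 (B^T *m invmx IQ *m B) w = mnorm2 (invmx IQ) (B *m w).
Proof. by rewrite /mnorm2 -!mulmxA dotv_mulmx trmxK. Qed.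

Lemma mnorm2_subM k (K V : 'M[R]_k) l w :
  mnorm2 (K - l *: V) w = mnorm2 K w - l * mnorm2 V w.
Proof. by rewrite /mnorm2 mulmxBl -scalemxAl dotvBl dotvZl. Qed.

Hypothesis LS2max : forall a, eigenvalue A a -> a <= LS2.
Hypothesis LS2eig : eigenvalue A LS2.
Hypothesis m0 : (0 < m)%N.

Lemma LS2_ge0 : 0 <= LS2.
Proof. exact: eig_ge0. Qed.

Lemma LS2_bound w : mnorm2 (invmx IQ) (B *m w) <= LS2 * mnorm2 IV w.
Proof.
set K := B^T *m invmx IQ *m B.
have sK : K^T = K by rewrite /K !trmx_mul trmxK sym_inv // mulmxA.
have sV : IV^T = IV by case: spV.
have [w0 w00 Hmax] := rayleigh_max K m0 spV.
have pw0 : 0 < mnorm2 IV w0 by case: spV => _ H; apply: H.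
set l := mnorm2 K w0 / mnorm2 IV w0.
have Hl : forall w, mnorm2 K w <= l * mnorm2 IV w.
  move=> w1; rewrite /l mulrAC ler_pdivlMr //; exact: Hmax.
have ll : l <= LS2.
  have [l0|l0] := lerP l 0; first exact: le_trans l0 LS2_ge0.
  set S := K - l *: IV.
  have sS : S^T = S by rewrite /S linearB /= linearZ /= sK sV.
  have qS : forall w, mnorm2 S w <= 0.
    by move=> w1; rewrite /S mnorm2_subM; have := Hl w1; lra.
  have qS0 : mnorm2 S w0 = 0.
    by rewrite /S mnorm2_subM /l mulrAC mulfK ?gt_eqF // subrr.
  set z := S *m w0.
  have z0 : z = 0.
    apply: dotv_eq0.
    set a := dotv z z; set b := mnorm2 S z.
    have b0 : b <= 0 := qS z.
    have a0 : 0 <= a := dotv_ge0 z.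
    have := qS (w0 + (a / (1 - b)) *: z).
    rewrite mnorm2D // qS0 mnorm2Z dotvZr -/z -/a -/b add0r => H.
    have d0 : 0 < 1 - b by lra.
    have : a ^+ 2 * (2 - b) <= 0.
      have -> : a ^+ 2 * (2 - b) = (2 * (a / (1 - b) * a) + (a / (1 - b)) ^+ 2 * b) * (1 - b) ^+ 2.
        by field; rewrite gt_eqF.
      by rewrite pmulr_lle0 // exprn_gt0.
    move=> H2; apply/eqP; rewrite -sqrf_eq0 eq_le sqr_ge0 andbT.
    by rewrite -(pmulr_lle0 _ (_ : 0 < 2 - b)) //; lra.
  have Kw0 : K *m w0 = l *: (IV *m w0).
    by apply/eqP; rewrite -subr_eq0; apply/eqP; rewrite scalemxAl -mulmxBl.
  have Bw0 : B *m w0 != 0.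
    apply/negP => /eqP Bw; move: Kw0; rewrite /K -mulmxA Bw mulmx0 => /esym/eqP.
    rewrite scaler_eq0 gt_eqF //= => /eqP H.
    by move: w00; rewrite -(mulKmx (spd_unit spV) w0) H mulmx0 eqxx.
  apply: LS2max; apply/eigenvalueP; exists (B *m w0)^T; last first.
    by rewrite -(inj_eq (@trmx_inj _ _ _)) trmxK trmx0.
  have : (K *m w0)^T = l *: (w0^T *m IV) by rewrite Kw0 linearZ /= trmx_mul sV.
  rewrite trmx_mul sK /K => H.
  rewrite /A trmx_mul !mulmxA.
  have -> : w0^T *m B^T *m invmx IQ *m B = w0^T *m (B^T *m invmx IQ *m B) by rewrite !mulmxA.
  rewrite H -!scalemxAl -(mulmxA _ IV) mulmxV ?spd_unit // mulmx1.
  by [].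

rewrite -mnorm2_Bw; apply: le_trans (Hl w) _.
by rewrite ler_wpM2r // spd_ge0.
Qed.

End Eig.

Section Der.
Variable R : realType.

Lemma deriv_right_cvg (k : nat) (F : 'cV[R]_k -> R) x v d :
  is_derive x v F d ->
  (fun t : R => t^-1 *: (F (t *: v + x) - F x)) @ 0^'+ --> d.
Proof.
move=> [dF dv]; rewrite -dv.
have cvfx := dF.
move=> A /cvfx /nbhs_ballP [_ /posnumP[e] xe_A].
by exists e%:num => //= y xe_y; rewrite lt_def => /andP [xney _]; apply: xe_A.
Qed.

Lemma deriv_ge (k : nat) (F : 'cV[R]_k -> R) x v d c :
  is_derive x v F d ->
  (forall t : R, 0 < t <= 1 -> c <= t^-1 * (F (t *: v + x) - F x)) -> c <= d.
Proof.
move=> /deriv_right_cvg H Hc.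
apply: (cvgr_to_ge H).
near=> t. apply: Hc. apply/andP; split.
  by near: t; exact: nbhs_right_gt.
by near: t; exact: nbhs_right_le.
Unshelve. all: by end_near.
Qed.

Lemma deriv_le (k : nat) (F : 'cV[R]_k -> R) x v d c :
  is_derive x v F d ->
  (forall t : R, 0 < t <= 1 -> t^-1 * (F (t *: v + x) - F x) <= c) -> d <= c.
Proof.
move=> /deriv_right_cvg H Hc.
apply: (cvgr_to_le H).
near=> t. apply: Hc. apply/andP; split.
  by near: t; exact: nbhs_right_gt.
by near: t; exact: nbhs_right_le.
Unshelve. all: by end_near.
Qed.

Lemma le_quot (t A c : R) : 0 < t -> t * c <= A -> c <= t^-1 * A.
Proof.
move=> t0 H; have : t^-1 * (t * c) <= t^-1 * A by rewrite ler_wpM2l // invr_ge0 ltW.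
by rewrite mulrA mulVf ?gt_eqF // mul1r.
Qed.

Lemma ge_quot (t A c : R) : 0 < t -> A <= t * c -> t^-1 * A <= c.
Proof.
move=> t0 H; have : t^-1 * A <= t^-1 * (t * c) by rewrite ler_wpM2l // invr_ge0 ltW.
by rewrite mulrA mulVf ?gt_eqF // mul1r.
Qed.

Lemma convex_grad (k : nat) (h : 'cV[R]_k -> R) dh x y :
  is_gradient h dh -> convex_fun h -> dotv (dh x) (y - x) <= h y - h x.
Proof.
move=> gh ch; apply: (deriv_le (gh x (y - x))) => t /andP[t0 t1].
apply: ge_quot => //.
have := ch y x t; rewrite t1 ltW //= => /(_ isT).
have -> : t *: y + (1 - t) *: x = t *: (y - x) + x.
  by rewrite scalerBr scalerBl scale1r addrA addrAC.
move=> H; lra.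
Qed.

Lemma convex_mono (k : nat) (h : 'cV[R]_k -> R) dh x y :
  is_gradient h dh -> convex_fun h -> 0 <= dotv (dh x - dh y) (x - y).
Proof.
move=> gh ch; have h1 := convex_grad x y gh ch; have h2 := convex_grad y x gh ch.
move: h1; rewrite -(opprB x y) dotvNr dotvBl => h1; lra.
Qed.

Lemma dotv_pos_eq0 (k : nat) (w : 'cV[R]_k) : (forall v, 0 <= dotv w v) -> w = 0.
Proof.
move=> H; apply: dotv_eq0; have := H (- w); rewrite dotvNr => H1.
have := dotv_ge0 w; lra.
Qed.

Lemma saddle_f (m n : nat) f df h (B : 'M[R]_(n, m)) us ps :
  is_gradient f df -> saddle_point f h B us ps -> df us + B^T *m ps = 0.
Proof.
move=> gf sp; apply: dotv_pos_eq0 => v; rewrite dotvDl.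
suff : - dotv (B^T *m ps) v <= dotv (df us) v by lra.
apply: (deriv_ge (gf us v)) => t /andP[t0 t1]; apply: le_quot => //.
have [_ H] := sp (t *: v + us) ps; move: H; rewrite /lagr mulmxDr -scalemxAr dotvDl dotvZl.
rewrite [dotv (B *m v) ps]dotv_mulmx [dotv v _]dotvC; lra.
Qed.

Lemma saddle_h (m n : nat) f h dh (B : 'M[R]_(n, m)) us ps :
  is_gradient h dh -> saddle_point f h B us ps -> dh ps = B *m us.
Proof.
move=> gh sp; apply/eqP; rewrite -subr_eq0; apply/eqP; apply: dotv_pos_eq0 => v.
rewrite dotvBl.
suff : dotv (B *m us) v <= dotv (dh ps) v by lra.
apply: (deriv_ge (gh ps v)) => t /andP[t0 t1]; apply: le_quot => //.
have [H _] := sp us (t *: v + ps); move: H; rewrite /lagr dotvDr dotvZr; lra.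
Qed.

End Der.

Section Vec.
Variable R : realType.
Variables (m n : nat) (B : 'M[R]_(n, m)) (df : 'cV[R]_m -> 'cV[R]_m) (dh : 'cV[R]_n -> 'cV[R]_n)
  (IV : 'M[R]_m) (IQ : 'M[R]_n) (us : 'cV[R]_m) (ps : 'cV[R]_n).
Hypothesis uV : IV \in unitmx.
Hypothesis uQ : IQ \in unitmx.
Hypothesis sadf : df us + B^T *m ps = 0.
Hypothesis sadh : dh ps = B *m us.

Lemma vec_u a uk p1 u1 : a != 0 ->
  IV *m (u1 - uk) = a *: (grad_ftilde IV B df a uk p1 u1 - (df u1 - df us) - B^T *m (p1 - ps)).
Proof.
move=> a0; rewrite /grad_ftilde.
rewrite (_ : u1 - uk + a *: (invmx IV *m (B^T *m p1)) = (u1 - uk) + a *: (invmx IV *m (B^T *m p1))) //.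
rewrite (mulmxDr IV (u1 - uk)) -scalemxAr mulKVmx // (mulmxBr B^T p1 ps).
have e : df us = - (B^T *m ps) by apply/eqP; rewrite -addr_eq0 sadf.
rewrite e.
move: (IV *m (u1 - uk)) (B^T *m p1) (B^T *m ps) (df u1) => X Y Z F.
apply/matrixP => i j; rewrite !mxE; by field.
Qed.

Lemma vec_p a uk pk : 
  IQ *m (p_next IV IQ B df dh a uk pk - pk) =
  a *: (- (dhB dh B IV (p_next IV IQ B df dh a uk pk) - dhB dh B IV ps)
        - (dhB dh B IV pk - dhB dh B IV (p_next IV IQ B df dh a uk pk))
        + B *m (emap IV df (uk) - emap IV df us)).
Proof.
rewrite /p_next /u_half /dhB /emap.
set p1 := pk - _.
rewrite (_ : p1 - pk = - (a *: (invmx IQ *m (dh pk - B *m (uk - invmx IV *m (df uk + B^T *m pk)))))); last first.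
  by rewrite /p1 addrAC subrr add0r.
rewrite mulmxN -scalemxAr mulKVmx //.
have e : df us = - (B^T *m ps) by apply/eqP; rewrite -addr_eq0 sadf.
rewrite e sadh !(mulmxDr, mulmxN) !mulmxA.
move: (dh pk) (dh p1) (B *m uk) (B *m us) (B *m invmx IV *m df uk) (B *m invmx IV *m B^T *m pk)
  (B *m invmx IV *m B^T *m p1) (B *m invmx IV *m B^T *m ps) => a1 a2 a3 a4 a5 a6 a7 a8.
apply/matrixP => i j; rewrite !mxE; ring.
Qed.

Lemma vec_e u1 : emap IV df u1 - emap IV df us = (u1 - us) - invmx IV *m (df u1 - df us).
Proof.
rewrite /emap mulmxBr.
move: (invmx IV *m df u1) (invmx IV *m df us) => X Y.
apply/matrixP => i j; rewrite !mxE; ring.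
Qed.

End Vec.

Section Step.
Variable R : realType.
Variables (m n : nat) (B : 'M[R]_(n, m)) (f : 'cV[R]_m -> R) (df : 'cV[R]_m -> 'cV[R]_m)
  (h : 'cV[R]_n -> R) (dh : 'cV[R]_n -> 'cV[R]_n)
  (IV : 'M[R]_m) (IQ : 'M[R]_n) (us : 'cV[R]_m) (ps : 'cV[R]_n)
  (muf Lf Le muhB LhB LS2 : R).
Hypothesis spV : spd IV.
Hypothesis spQ : spd IQ.
Hypothesis Sf : in_S11 f df IV muf Lf.
Hypothesis muf0 : 0 < muf.
Hypothesis Lf0 : 0 < Lf.
Hypothesis Lf2 : Lf < 2.
Hypothesis HLe : forall x y : 'cV[R]_m,
     mnorm2 IV (emap IV df x - emap IV df y) <= Le ^+ 2 * mnorm2 IV (x - y).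
Hypothesis muhB0 : 0 < muhB.
Hypothesis ShB : in_S11 (hB h B IV) (dhB dh B IV) IQ muhB LhB.
Hypothesis LhB0 : 0 < LhB.
Hypothesis LS20 : 0 <= LS2.
Hypothesis HLS : forall w, mnorm2 (invmx IQ) (B *m w) <= LS2 * mnorm2 IV w.
Hypothesis sadf : df us + B^T *m ps = 0.
Hypothesis sadh : dh ps = B *m us.
Hypothesis monoh : forall x y, 0 <= dotv (dh x - dh y) (x - y).

Let muQ := (2 - Lf) * muhB.
Let LSQ2 := LhB ^+ 2 + Le ^+ 2 * LS2.

Lemma LSQ2_gt0 : 0 < LSQ2.
Proof.
rewrite /LSQ2; apply: (lt_le_trans (exprn_gt0 2 LhB0)).
by rewrite lerDl mulr_ge0 // sqr_ge0.
Qed.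

Lemma D_bound (pk p1 : 'cV[R]_n) (uk u1 : 'cV[R]_m) :
  mnorm2 (invmx IQ) (B *m (emap IV df uk - emap IV df u1) - (dhB dh B IV pk - dhB dh B IV p1))
  <= LSQ2 * (mnorm2 IV (u1 - uk) + mnorm2 IQ (p1 - pk)).
Proof.
set D2 := B *m _; set D1 := dhB _ _ _ pk - _.
set U := mnorm2 IV (u1 - uk); set P := mnorm2 IQ (p1 - pk).
have spQi := spd_inv spQ.
have sQi : (invmx IQ)^T = invmx IQ by case: spQi.
have U0 : 0 <= U := spd_ge0 _ spV.
have P0 : 0 <= P := spd_ge0 _ spQ.
have hD1 : mnorm2 (invmx IQ) D1 <= LhB ^+ 2 * P.
  have := cocoer pk p1 spQ ShB (ltW muhB0) LhB0.
  move=> /(lip_of_cocoer spQ LhB0); rewrite -(opprB p1 pk) mnorm2N //.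
have hD2 : mnorm2 (invmx IQ) D2 <= Le ^+ 2 * LS2 * U.
  apply: le_trans (HLS _) _.
  rewrite (mulrC _ LS2) -mulrA ler_wpM2l //.
  by have := HLe uk u1; rewrite -(opprB u1 uk) mnorm2N.
have [c20|c20] := eqVneq (Le ^+ 2 * LS2) 0.
  have D20 : D2 = 0.
    by apply: (spd_eq0 spQi); move: hD2; rewrite c20 mul0r.
  rewrite D20 sub0r mnorm2N /LSQ2 c20 addr0.
  apply: le_trans hD1 _; rewrite ler_wpM2l ?sqr_ge0 //; lra.
have c2p : 0 < Le ^+ 2 * LS2 by rewrite lt_def c20 mulr_ge0 // sqr_ge0.
have c1p : 0 < LhB ^+ 2 by rewrite exprn_gt0.
set c1 := LhB ^+ 2 in hD1 c1p *; set c2 := Le ^+ 2 * LS2 in hD2 c2p c20 *.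
set s := c1 / c2.
have s0 : 0 < s by rewrite divr_gt0.
rewrite mnorm2B //.
have Y := young D2 (- D1) spQi s0; rewrite mnorm2N dotvNr in Y.
have e1 : (1 + s) * c2 = c1 + c2 by rewrite /s; field; rewrite gt_eqF.
have e2 : (1 + s^-1) * c1 = c1 + c2 by rewrite /s; field; rewrite ?gt_eqF //.
have h2 : (1 + s) * mnorm2 (invmx IQ) D2 <= (1 + s) * (c2 * U).
  by rewrite ler_wpM2l //; lra.
have h1 : (1 + s^-1) * mnorm2 (invmx IQ) D1 <= (1 + s^-1) * (c1 * P).
  by rewrite ler_wpM2l //; have := invr_gt0 s; lra.
rewrite mulrA e1 in h2; rewrite mulrA e2 in h1.
rewrite /LSQ2 -/c1 -/c2; lra.
Qed.

Lemma step a uk pk u1 eps :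
  0 < a -> a * LSQ2 < muQ ->
  mnorm2 (invmx IV) (grad_ftilde IV B df a uk (p_next IV IQ B df dh a uk pk) u1) <= eps ->
  energy IV IQ us ps u1 (p_next IV IQ B df dh a uk pk) <=
    (1 + a * Num.min (muf / 2) (muQ - a * LSQ2))^-1 * energy IV IQ us ps uk pk
    + 2 * a / ((1 + a * Num.min (muf / 2) (muQ - a * LSQ2)) * muf) * eps.
Proof.
move=> a0 aL Heps; set muk := Num.min (muf / 2) (muQ - a * LSQ2).
have uV := spd_unit spV; have uQ := spd_unit spQ.
have sV : IV^T = IV by case: spV.
have sQ : IQ^T = IQ by case: spQ.
have spVi := spd_inv spV; have spQi := spd_inv spQ.
have sVi : (invmx IV)^T = invmx IV by case: spVi.
set p1 := p_next IV IQ B df dh a uk pk.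
set dl := grad_ftilde _ _ _ _ _ _ _ in Heps.
set ub := u1 - us; set pb := p1 - ps.
set g1 := df u1 - df us.
set h1 := dhB dh B IV p1 - dhB dh B IV ps.
set D := B *m (emap IV df uk - emap IV df u1) - (dhB dh B IV pk - dhB dh B IV p1).
have VU : IV *m (u1 - uk) = a *: (dl - g1 - B^T *m pb).
  by apply: vec_u => //; rewrite gt_eqF.
have VP : IQ *m (p1 - pk) = a *: (- h1 - (dhB dh B IV pk - dhB dh B IV p1)
        + B *m (emap IV df uk - emap IV df us)).
  exact: vec_p.
have VE : emap IV df u1 - emap IV df us = ub - invmx IV *m g1 by exact: vec_e.
set nu := mnorm2 IV ub; set np := mnorm2 IQ pb.
set U := mnorm2 IV (u1 - uk); set P := mnorm2 IQ (p1 - pk).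
set X := dotv g1 ub; set Y := dotv h1 pb.
set Z := mnorm2 (invmx IV) (B^T *m pb).
set G := mnorm2 (invmx IV) g1.
set C := dotv (invmx IV *m g1) (B^T *m pb).
set W := dotv ub (B^T *m pb).
set Dd := dotv D pb.
set dlt := dotv dl ub.
have I1 : mnorm2 IV (uk - us) = nu - 2 * (a * dlt - a * X - a * W) + U.
  have -> : uk - us = ub - (u1 - uk) by rewrite /ub; apply/matrixP => i j; rewrite !mxE; ring.
  rewrite mnorm2B // -/nu -/U; congr (_ - 2 * _ + _).
  rewrite dotv_mulmx sV dotvC VU dotvZl dotvBl (dotvBl dl g1) -/X -/dlt.
  by rewrite [dotv (B^T *m pb) ub]dotvC -/W; ring.
have I2 : mnorm2 IQ (pk - ps) = np - 2 * (- a * Y + a * Dd + a * W - a * C) + P.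
  have -> : pk - ps = pb - (p1 - pk) by rewrite /pb; apply/matrixP => i j; rewrite !mxE; ring.
  rewrite mnorm2B // -/np -/P; congr (_ - 2 * _ + _).
  rewrite dotv_mulmx sQ dotvC VP dotvZl -/p1.
  have -> : emap IV df uk - emap IV df us = (emap IV df uk - emap IV df u1) + (emap IV df u1 - emap IV df us).
    by rewrite addrA subrK.
  rewrite VE mulmxDr.
  have eD : - h1 - (dhB dh B IV pk - dhB dh B IV p1) + (B *m (emap IV df uk - emap IV df u1) + B *m (ub - invmx IV *m g1))
     = - h1 + D + B *m (ub - invmx IV *m g1).
    by rewrite /D -!addrA; congr (_ + _); exact: addrCA.
  rewrite /h1 in eD *; rewrite eD (dotvDl (- h1 + D)) (dotvDl (- h1) D) dotvNl -/h1 -/Y -/Dd.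
  rewrite dotv_mulmx dotvBl -/W -/C; ring.
have F1 : 2 * dlt <= (2 / muf) * eps + (muf / 2) * nu.
  have c0 : 0 < 2 / muf by rewrite divr_gt0.
  have := young_dual dl ub spV c0; rewrite invf_div -/nu -/dlt => H.
  apply: le_trans H _; rewrite lerD2r ler_wpM2l // ltW //.
have F2 : muf * nu <= X.
  by have := s11_mono u1 us Sf.
have F3 : muhB * np <= Y.
  by have := s11_mono p1 ps ShB.
have F4 : Z <= Y.
  rewrite /Y /h1 /dhB.
  have -> : dh p1 + B *m invmx IV *m B^T *m p1 - (dh ps + B *m invmx IV *m B^T *m ps)
    = (dh p1 - dh ps) + B *m invmx IV *m B^T *m pb.
    rewrite /pb (mulmxBr _ p1 ps); move: (dh p1) (dh ps) (B *m invmx IV *m B^T *m p1) (B *m invmx IV *m B^T *m ps).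
    by move=> x1 x2 x3 x4; apply/matrixP => i j; rewrite !mxE; ring.
  rewrite dotvDl; have := monoh p1 ps; rewrite -/pb.
  suff -> : dotv (B *m invmx IV *m B^T *m pb) pb = Z by lra.
  by rewrite /Z /mnorm2 -!mulmxA dotv_mulmx.
have F5 : G <= Lf * X.
  by have := cocoer u1 us spV Sf (ltW muf0) Lf0.
have F6 : - 2 * C <= Lf^-1 * G + Lf * Z.
  have c0 : 0 < Lf^-1 by rewrite invr_gt0.
  have := young (- g1) (B^T *m pb) spVi c0; rewrite invrK mnorm2N mulmxN dotvNl -/G -/Z -/C.
  lra.
have F7 : 2 * Dd <= (a * LSQ2)^-1 * mnorm2 (invmx IQ) D + (a * LSQ2) * np.
  have c0 : 0 < (a * LSQ2)^-1 by rewrite invr_gt0 mulr_gt0 // LSQ2_gt0.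
  by have := young_dual D pb spQ c0; rewrite invrK.
have F8 : mnorm2 (invmx IQ) D <= LSQ2 * (U + P) := D_bound pk p1 uk u1.
have L0 := LSQ2_gt0.
have nu0 : 0 <= nu := spd_ge0 _ spV.
have np0 : 0 <= np := spd_ge0 _ spQ.
have U0 : 0 <= U := spd_ge0 _ spV.
have P0 : 0 <= P := spd_ge0 _ spQ.
have eps0 : 0 <= eps by apply: le_trans Heps; exact: spd_ge0.
have muk1 : muk <= muf / 2 by rewrite /muk ge_min lexx.
have muk2 : muk <= muQ - a * LSQ2 by rewrite /muk ge_min lexx orbT.
have mukp : 0 < muk by rewrite /muk lt_min divr_gt0 //= subr_gt0.
have K7 : a * (2 * Dd) <= U + P + a ^+ 2 * LSQ2 * np.
  have := ler_wpM2l (ltW a0) F7.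
  have : a * ((a * LSQ2)^-1 * mnorm2 (invmx IQ) D) = LSQ2^-1 * mnorm2 (invmx IQ) D.
    by field; rewrite ?gt_eqF.
  have : LSQ2^-1 * mnorm2 (invmx IQ) D <= U + P.
    rewrite -(ler_pM2l L0) mulrA mulfV ?gt_eqF // mul1r //.
  have : a * (a * LSQ2 * np) = a ^+ 2 * LSQ2 * np by rewrite expr2; ring.
  move=> e1 e2 e3; rewrite mulrDr; lra.
have K1 := ler_wpM2l (ltW a0) F1.
have K6 : a * (- 2 * C) <= a * (X + Lf * Y).
  apply: ler_wpM2l; first exact: ltW.
  have : Lf^-1 * G <= X.
    rewrite -(ler_pM2l Lf0) mulrA mulfV ?gt_eqF // mul1r //.
  have : Lf * Z <= Lf * Y by apply: ler_wpM2l => //; exact: ltW.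
  lra.
have K2 := ler_wpM2l (ltW a0) F2.
have K3 : a * (2 - Lf) * (muhB * np) <= a * (2 - Lf) * Y.
  by apply: ler_wpM2l => //; apply: mulr_ge0; [exact: ltW | rewrite subr_ge0 ltW].
have main : nu + np - (mnorm2 IV (uk - us) + mnorm2 IQ (pk - ps))
   <= (2 * a / muf) * eps - a * (muf / 2) * nu - a * (muQ - a * LSQ2) * np.
  rewrite I1 I2 /muQ.
  have : 2 * a / muf * eps = a * (2 / muf * eps) by rewrite !mulrA (mulrC 2 a).
  lra.
have M1 : a * muk * nu <= a * (muf / 2) * nu.
  by rewrite ler_wpM2r // ler_wpM2l // ltW.
have M2 : a * muk * np <= a * (muQ - a * LSQ2) * np.
  by rewrite ler_wpM2r // ler_wpM2l // ltW.
have fin : (1 + a * muk) * energy IV IQ us ps u1 p1 <= energy IV IQ us ps uk pk + 2 * a / muf * eps.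
  rewrite /energy -/nu -/np.
  have H : 0 <= 2 * a / muf * eps.
    apply: mulr_ge0 => //; apply: divr_ge0; last exact: ltW.
    by apply: mulr_ge0 => //; exact: ltW.
  lra.
have pos : 0 < 1 + a * muk by rewrite addr_gt0 // mulr_gt0.
have e1 : energy IV IQ us ps u1 p1 = (1 + a * muk)^-1 * ((1 + a * muk) * energy IV IQ us ps u1 p1).
  by field; rewrite gt_eqF.
have e2 : (1 + a * muk)^-1 * energy IV IQ us ps uk pk + 2 * a / ((1 + a * muk) * muf) * eps
  = (1 + a * muk)^-1 * (energy IV IQ us ps uk pk + 2 * a / muf * eps).
  by field; rewrite !gt_eqF.
rewrite e1 e2; apply: ler_wpM2l => //; rewrite invr_ge0 ltW //.
Qed.

End Step.

Theorem theorem4p4 (R : realType) (m n : nat) (B : 'M[R]_(n, m))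
  (f : 'cV[R]_m -> R) (df : 'cV[R]_m -> 'cV[R]_m)
  (h : 'cV[R]_n -> R) (dh : 'cV[R]_n -> 'cV[R]_n)
  (IV : 'M[R]_m) (IQ : 'M[R]_n) (us : 'cV[R]_m) (ps : 'cV[R]_n)
  (muf Lf Le muhB LhB LS2 : R)
  (u : nat -> 'cV[R]_m) (p : nat -> 'cV[R]_n) (alpha eps : nat -> R) :
  (n <= m)%N -> \rank B = n ->
  is_gradient f df -> is_gradient h dh ->
  convex_fun f -> convex_fun h ->
  lipschitz_map df -> lipschitz_map dh ->
  saddle_point f h B us ps ->
  spd IV -> spd IQ ->
  in_S11 f df IV muf Lf -> 0 < muf -> muf <= Lf -> Lf < 2 ->
  (* L_{e,I_V} : Lipschitz constant of e in ||.||_{I_V} *)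
  0 <= Le ->
  (forall x y : 'cV[R]_m,
     mnorm2 IV (emap IV df x - emap IV df y) <= Le ^+ 2 * mnorm2 IV (x - y)) ->
  (* convexity / smoothness constants of h_B w.r.t. I_Q *)
  0 < muhB ->
  in_S11 (hB h B IV) (dhB dh B IV) IQ muhB LhB ->
  (* L_S^2 = lambda_max (I_Q^{-1} B I_V^{-1} B^T) *)
  eigenvalue (invmx IQ *m B *m invmx IV *m B^T) LS2 ->
  (forall a, eigenvalue (invmx IQ *m B *m invmx IV *m B^T) a -> a <= LS2) ->
  (* the inexact IMEX iteration *)
  (forall k, p k.+1 = p_next IV IQ B df dh (alpha k) (u k) (p k)) ->
  (forall k, mnorm2 (invmx IV) (grad_ftilde IV B df (alpha k) (u k) (p k.+1) (u k.+1))
               <= eps k) ->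
  let muV := muf in
  let muQ := (2 - Lf) * muhB in
  let LSQ2 := LhB ^+ 2 + Le ^+ 2 * LS2 in
  let E := energy IV IQ us ps in
  (forall k, 0 < alpha k < muQ / LSQ2 ->
     let muk := Num.min (muV / 2) (muQ - alpha k * LSQ2) in
     E (u k.+1) (p k.+1) <=
       (1 + alpha k * muk)^-1 * E (u k) (p k)
       + 2 * alpha k / ((1 + alpha k * muk) * muV) * eps k)
  /\
  ((forall k, alpha k = muQ / (2 * LSQ2)) ->
     let mu := Num.min muV muQ in
     let rho := (1 + muQ * mu / (4 * LSQ2))^-1 in
     0 < rho < 1 /\
     forall N : nat,
       E (u N.+1) (p N.+1) <=
         rho ^+ N.+1 * E (u 0%N) (p 0%N)
         + muQ / (muV * LSQ2) * \sum_(0 <= k < N.+1) rho ^+ (N - k).+1 * eps k).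
Proof.
move=> nm rkB gf gh cf ch lf lh sp spV spQ Sf muf0 mufL Lf2 Le0 HLe muhB0 ShB LS2eig LS2max hp heps.
move=> muV muQ LSQ2 E.
have Lf0 : 0 < Lf by apply: lt_le_trans mufL.
have n0 : (0 < n)%N.
  case/eigenvalueP: LS2eig => v _ v0; case: (posnP n) => [n0|//].
  move: v0; have -> : v = 0 by apply/matrixP => i [j hj]; exfalso; move: hj; rewrite n0 ltn0.
  by rewrite eqxx.
have m0 : (0 < m)%N by apply: leq_trans nm.
have LhB0 : 0 < LhB.
  pose x : 'cV[R]_n := const_mx 1.
  have x0 : x != 0.
    apply/negP => /eqP/matrixP/(_ (Ordinal n0) 0); rewrite !mxE => /eqP.
    by rewrite oner_eq0.
  exact: lt_le_trans muhB0 (s11_le spQ x0 ShB).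
have LS20 : 0 <= LS2 := LS2_ge0 spV spQ LS2eig.
have HLS := LS2_bound spV spQ LS2max LS2eig m0.
have sadf := saddle_f gf sp.
have sadh := saddle_h gh sp.
have monoh : forall x y, 0 <= dotv (dh x - dh y) (x - y).
  by move=> x y; exact: convex_mono.
have L0 : 0 < LSQ2 := LSQ2_gt0 Le LhB0 LS20.
have muQ0 : 0 < muQ by rewrite /muQ mulr_gt0 // subr_gt0.
have part1 : forall k, 0 < alpha k < muQ / LSQ2 ->
     E (u k.+1) (p k.+1) <=
       (1 + alpha k * Num.min (muV / 2) (muQ - alpha k * LSQ2))^-1 * E (u k) (p k)
       + 2 * alpha k / ((1 + alpha k * Num.min (muV / 2) (muQ - alpha k * LSQ2)) * muV) * eps k.
  move=> k /andP[a0 a1].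
  rewrite ltr_pdivlMr // in a1.
  rewrite /E hp.
  have := heps k; rewrite hp => hk.
  exact: (step spV spQ Sf muf0 Lf0 Lf2 HLe muhB0 ShB LhB0 LS20 HLS sadf sadh monoh a0 a1 hk).
split; first exact: part1.
move=> hal mu rho.
set a := muQ / (2 * LSQ2).
have mu0 : 0 < mu by rewrite /mu lt_min muf0 muQ0.
have a0 : 0 < a by rewrite /a divr_gt0 // mulr_gt0.
have aLt : a < muQ / LSQ2.
  have q0 : 0 < muQ / LSQ2 by rewrite divr_gt0.
  have -> : a = (muQ / LSQ2) / 2 by rewrite /a; field; rewrite gt_eqF.
  lra.
have emin : Num.min (muV / 2) (muQ - a * LSQ2) = mu / 2.
  have -> : muQ - a * LSQ2 = muQ / 2 by rewrite /a; field; rewrite gt_eqF.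
  rewrite /mu /muV; have [hh|hh] := leP muf muQ.
    by rewrite min_l //; lra.
  by rewrite min_r //; lra.
have erho : (1 + a * Num.min (muV / 2) (muQ - a * LSQ2))^-1 = rho.
  rewrite emin /rho /a; have -> : muQ / (2 * LSQ2) * (mu / 2) = muQ * mu / (4 * LSQ2) by field; rewrite gt_eqF.
  done.
have c0 : 0 < muQ * mu / (4 * LSQ2).
  by apply: divr_gt0; [exact: mulr_gt0 | apply: mulr_gt0 => //; lra].
have rho0 : 0 < rho by rewrite /rho invr_gt0 addr_gt0.
have rho1 : rho < 1 by rewrite /rho invf_lt1 ?addr_gt0 // ltrDl.
split; first by rewrite rho0 rho1.
set C := muQ / (muV * LSQ2).
have rec : forall k, E (u k.+1) (p k.+1) <= rho * E (u k) (p k) + C * (rho * eps k).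
  move=> k; have := part1 k; rewrite hal a0 aLt => /(_ isT).
  rewrite -/a erho.
  have -> : 2 * a / ((1 + a * Num.min (muV / 2) (muQ - a * LSQ2)) * muV) = C * rho.
    have hr : 1 + muQ * mu / (4 * LSQ2) != 0 by rewrite gt_eqF // addr_gt0.
    have p4 : 0 < 4 * LSQ2 + muQ * mu.
      by apply: addr_gt0; [apply: mulr_gt0 => //; lra | exact: mulr_gt0].
    rewrite emin /C /rho /a /muV; field.
    by rewrite (gt_eqF L0) (gt_eqF p4) (gt_eqF muf0).


  by rewrite mulrA.
elim=> [|N IH].
  by rewrite big_nat1 subnn; exact: (rec 0%N).
apply: le_trans (rec N.+1) _.
rewrite big_nat_recr //= subnn expr1.
have -> : \sum_(0 <= k < N.+1) rho ^+ (N.+1 - k).+1 * eps k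
   = rho * \sum_(0 <= k < N.+1) rho ^+ (N - k).+1 * eps k.
  rewrite mulr_sumr; apply: eq_big_nat => k /andP[_ hk].
  by rewrite subSn // exprS mulrA.
have := ler_wpM2l (ltW rho0) IH.
move=> H.
rewrite exprS -mulrA.
have e : rho * (rho ^+ N.+1 * E (u 0%N) (p 0%N) + C * \sum_(0 <= k < N.+1) rho ^+ (N - k).+1 * eps k)
  = rho * (rho ^+ N.+1 * E (u 0%N) (p 0%N)) + C * (rho * \sum_(0 <= k < N.+1) rho ^+ (N - k).+1 * eps k) by ring.
rewrite e in H.
rewrite [C * (_ + _)]mulrDr.
lra.
Qed.
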